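(* Let $n\ge 1$. Let $H_1$ and $H_2$ be two edge-disjoint Hamilton cycles of $G_{n,2}$, and let $E_1$ and $E_2$ be two edge-disjoint directed Hamilton cycles of $Q_{2n}$ (each starting at the origin $\mathbf 0$). Then the four Hamilton cycles $f(E_1,H_1)$, $f(E_1,H_2)$, $f(E_2,H_1)$, $f(E_2,H_2)$ of $Q_{4n}$ are pairwise edge-disjoint.
   Context: The hypercube $Q_{2n}$ is realized as the graph whose vertices are the quaternary strings $q_1q_2\cdots q_n$ with $q_i\in\{0,1,2,3\}$, two strings being adjacent iff they differ in exactly one position and there by $\pm1 \pmod 4$ (this is $C_4\Box\cdots\Box C_4$, $n$ factors, which is isomorphic to the $2n$-dimensional hypercube). The origin is $\mathbf 0=00\cdots0$. For $k\ge1$, $G_{n,k}$ denotes the Cartesian product $C_{4^n}\Box\cdots\Box C_{4^n}$ ($k$ factors), with vertex set $(\mathbb Z/4^n\mathbb Z)^k$, two vertices adjacent iff they differ in exactly one coordinate and there by $\pm1 \pmod{4^n}$. A directed Hamilton cycle $E$ of $Q_{2n}$ starting at $\mathbf 0$ lists the vertices as $e_0=\mathbf 0,e_1,\dots,e_{4^n-1}$ with consecutive ones (and $e_{4^n-1},e_0$) adjacent; put $\pi_E(e_p)=p\in\mathbb Z/4^n\mathbb Z$. Identify $V(Q_{4n})$ with pairs $(u,w)$ of quaternary strings of length $n$ (the first $n$ digits and the last $n$ digits), so $Q_{4n}=Q_{2n}\Box Q_{2n}$. The map $\Phi_E(u,w)=(\pi_E(u),\pi_E(w))$ is a bijection $V(Q_{4n})\to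 V(G_{n,2})$ such that $\Phi_E^{-1}$ sends every edge of $G_{n,2}$ to an edge of $Q_{4n}$. For a Hamilton cycle $H$ of $G_{n,2}$, $f(E,H):=\Phi_E^{-1}(H)$, a Hamilton cycle of $Q_{4n}$. *)

(* Defs.v *)
From mathcomp Require Import all_boot.
Set Implicit Arguments. Unset Strict Implicit. Unset Printing Implicit Defensive.

(* Vertices of Q_{2n}: quaternary strings q_1..q_n, i.e. functions 'I_n -> 'I_4 *)
Definition qvert (n : nat) := {ffun 'I_n -> 'I_4}.

Definition cadj (m x y : nat) : bool := ((x + 1) %% m == y) || ((y + 1) %% m == x).

(* Adjacency in Q_{2n} = C_4 □ ... □ C_4 *)
Definition qadj (n : nat) (u v : qvert n) : bool :=
  [exists i : 'I_n, [forall j : 'I_n, (j != i) ==> (u j == v j)] && cadj 4 (u i) (v i)].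

Definition qorigin (n : nat) : qvert n := [ffun _ => ord0].

(* Vertices of G_{n,2} = C_{4^n} □ C_{4^n} *)
Definition gvert (n : nat) := ('I_(4 ^ n) * 'I_(4 ^ n))%type.

Definition gadj (n : nat) (a b : gvert n) : bool :=
  ((a.1 == b.1) && cadj (4 ^ n) a.2 b.2) || ((a.2 == b.2) && cadj (4 ^ n) a.1 b.1).

Definition ham_cycle (T : finType) (adj : rel T) (s : seq T) : Prop :=
  [/\ forall v : T, v \in s, uniq s & cycle adj s].

Definition dir_ham_cycle0 (n : nat) (E : seq (qvert n)) : Prop :=
  ham_cycle (@qadj n) E /\ nth (qorigin n) E 0 = qorigin n.

Definition cyc_edge (T : eqType) (s : seq T) (x y : T) : bool :=
  has (fun p : T * T => ((p.1 == x) && (p.2 == y)) || ((p.1 == y) && (p.2 == x)))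
      (zip s (rot 1 s)).

Definition edge_disjoint (T : eqType) (s t : seq T) : Prop :=
  forall x y : T, cyc_edge s x y -> ~~ cyc_edge t x y.

(* pi_E(e_p) = p; Phi_E(u,w) = (pi_E u, pi_E w) *)
Definition piE (n : nat) (E : seq (qvert n)) (v : qvert n) : nat := index v E.

(* Phi_E^{-1}(p, q) = (e_p, e_q), a vertex (u,w) of Q_{4n} = Q_{2n} □ Q_{2n} *)
Definition PhiE_inv (n : nat) (E : seq (qvert n)) (a : gvert n) : qvert n * qvert n :=
  (nth (qorigin n) E a.1, nth (qorigin n) E a.2).

Definition fEH (n : nat) (E : seq (qvert n)) (H : seq (gvert n)) : seq (qvert n * qvert n) :=
  map (PhiE_inv E) H.

(* Main.v *)
Require Import Defs.
From mathcomp Require Import all_boot.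
From mathcomp Require Import zify.

Section Aux.
Variable T : eqType.

Lemma nth_rot1 (x0 : T) s i : i < size s -> nth x0 (rot 1 s) i = nth x0 s ((i+1) %% size s).
Proof.
case: s => [//|x p] /= Hi.
rewrite rot1_cons nth_rcons.
case: (ltnP i (size p)) => Hip.
- rewrite modn_small; last by lia. by rewrite addn1.
- have -> : i = size p by lia.
  by rewrite ?ltnn eqxx addn1 modnn.

Qed.

Lemma zip_rot1E (x0 : T) s : zip s (rot 1 s) =
  [seq (nth x0 s i, nth x0 s ((i+1) %% size s)) | i <- iota 0 (size s)].
Proof.
apply: (eq_from_nth (x0:=(x0,x0))).
  by rewrite size_zip size_rot minnn size_map size_iota.
move=> i; rewrite size_zip size_rot minnn => Hi.
by rewrite nth_zip ?size_rot // (nth_map 0) ?size_iota // nth_iota // add0n nth_rot1.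
Qed.

Lemma cyc_edgeP (x0 : T) s x y : cyc_edge s x y ->
  exists i, i < size s /\ ((nth x0 s i == x) && (nth x0 s ((i+1) %% size s) == y)
     || (nth x0 s i == y) && (nth x0 s ((i+1) %% size s) == x)).
Proof.
rewrite /cyc_edge (zip_rot1E x0) has_map => /hasP [i]; rewrite mem_iota add0n /= => Hi H.
by exists i.
Qed.

Lemma cyc_edge_nth (x0 : T) s i : i < size s ->
  cyc_edge s (nth x0 s i) (nth x0 s ((i+1) %% size s)).
Proof.
move=> Hi; rewrite /cyc_edge (zip_rot1E x0) has_map; apply/hasP; exists i.
  by rewrite mem_iota.
by rewrite /= !eqxx.
Qed.

Lemma cyc_edge_sym (s : seq T) x y : cyc_edge s x y = cyc_edge s y x.
Proof. by apply: eq_has => p /=; rewrite orbC. Qed.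

Lemma cycle_nth (x0 : T) (e : rel T) s i : cycle e s -> i < size s ->
  e (nth x0 s i) (nth x0 s ((i+1) %% size s)).
Proof.
case: s => [//|x p] /= /(pathP x0) H Hi.
have := H i; rewrite size_rcons => /(_ Hi).
rewrite -rcons_cons nth_rcons /= Hi -rot1_cons nth_rot1 //.
Qed.

Lemma cyc_edge_rel (e : rel T) s a b : symmetric e -> cycle e s -> cyc_edge s a b -> e a b.
Proof.
case: s => [//|z p] Hsym Hc /(cyc_edgeP z) [i [Hi /orP [] /andP [/eqP <- /eqP <-]]].
  exact: cycle_nth.
rewrite Hsym; exact: cycle_nth.
Qed.

End Aux.

Lemma cyc_edge_map (T U : eqType) (f : T -> U) s x y : cyc_edge (map f s) x y ->
  exists a b, [/\ cyc_edge s a b, x = f a & y = f b].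
Proof.
case: s => [//|z p] /(@cyc_edgeP _ (f z)) [i []].
rewrite size_map => Hi.
have Hj : (i + 1) %% size (z :: p) < size (z :: p) by rewrite ltn_pmod.
rewrite !(nth_map z) //.
case/orP => /andP [/eqP <- /eqP <-].
  by exists (nth z (z :: p) i), (nth z (z :: p) ((i + 1) %% size (z :: p))); split => //; apply: cyc_edge_nth.
exists (nth z (z :: p) ((i + 1) %% size (z :: p))), (nth z (z :: p) i); split => //.
by rewrite cyc_edge_sym; apply: cyc_edge_nth.
Qed.


Lemma ham_size n E : ham_cycle (@qadj n) E -> size E = 4 ^ n.
Proof.
case => Hall Hu _.
move/card_uniqP: Hu => <-.
have -> : #|E| = #|qvert n| by apply: eq_card => v; rewrite Hall inE.
by rewrite card_ffun !card_ord.
Qed.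

Lemma PhiE_inj n E (a c : gvert n) : size E = 4 ^ n -> uniq E ->
  PhiE_inv E a = PhiE_inv E c -> a = c.
Proof.
move=> Hs Hu; case: a c => a1 a2 [c1 c2] [/eqP e1 /eqP e2].
rewrite nth_uniq ?Hs ?ltn_ord // in e1.
rewrite nth_uniq ?Hs ?ltn_ord // in e2.
by congr pair; apply/val_inj/eqP.
Qed.

Lemma cadj_edge n E (i j : nat) : size E = 4 ^ n -> i < 4 ^ n -> j < 4 ^ n ->
  cadj (4 ^ n) i j -> cyc_edge E (nth (qorigin n) E i) (nth (qorigin n) E j).
Proof.
move=> Hs Hi Hj /orP [] /eqP <-.
  by rewrite -Hs; apply: cyc_edge_nth; rewrite Hs.
by rewrite cyc_edge_sym -Hs; apply: cyc_edge_nth; rewrite Hs.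
Qed.

Lemma cadj_irr N i : 1 < N -> i < N -> ~~ cadj N i i.
Proof.
move=> HN Hi; rewrite /cadj orbb.
case: (ltnP (i + 1) N) => H.
  rewrite modn_small //; apply/eqP; lia.
have -> : i + 1 = N by lia.
rewrite modnn; apply/eqP; lia.
Qed.

Lemma gadj_sym n : symmetric (@gadj n).
Proof.
move=> a b; rewrite /gadj /cadj.
by rewrite (eq_sym a.1) (eq_sym a.2) (orbC ((_ + 1) %% _ == b.2)) (orbC ((_ + 1) %% _ == b.1)).
Qed.

Lemma cross n E1 E2 (a b c d : gvert n) :
  1 <= n -> size E1 = 4 ^ n -> size E2 = 4 ^ n -> uniq E2 ->
  edge_disjoint E1 E2 -> gadj a b -> gadj c d ->
  PhiE_inv E1 a = PhiE_inv E2 c -> PhiE_inv E1 b = PhiE_inv E2 d -> False.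
Proof.
move=> Hn Hs1 Hs2 Hu2 HD.
have HN : 1 < 4 ^ n.
  have H : 0 < 4 ^ n.-1 by rewrite expn_gt0.
  have -> : n = n.-1.+1 by lia.
  rewrite expnS; lia.
case: a b c d => a1 a2 [b1 b2] [c1 c2] [d1 d2].
rewrite /PhiE_inv /= => Hab Hcd [e1 e2] [e3 e4].
case/orP: Hab => /andP [/eqP /= A Aadj].
- subst b1.
  have Ecd : c1 = d1.
    apply/val_inj/eqP; rewrite -(nth_uniq (qorigin n) _ _ Hu2) ?Hs2 ?ltn_ord //.
    by rewrite -e1 -e3.
  subst d1.
  case/orP: Hcd => /andP [_ Cadj] /=.
    have := HD _ _ (@cadj_edge _ _ _ _ Hs1 (ltn_ord a2) (ltn_ord b2) Aadj).
    by rewrite e2 e4 (@cadj_edge _ _ _ _ Hs2 (ltn_ord c2) (ltn_ord d2) Cadj).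
  by move: Cadj; rewrite (negbTE (@cadj_irr _ _ HN (ltn_ord _))).
- subst b2.
  have Ecd : c2 = d2.
    apply/val_inj/eqP; rewrite -(nth_uniq (qorigin n) _ _ Hu2) ?Hs2 ?ltn_ord //.
    by rewrite -e2 -e4.
  subst d2.
  case/orP: Hcd => /andP [_ Cadj] /=.
    by move: Cadj; rewrite (negbTE (@cadj_irr _ _ HN (ltn_ord _))).
  have := HD _ _ (@cadj_edge _ _ _ _ Hs1 (ltn_ord a1) (ltn_ord b1) Aadj).
  by rewrite e1 e3 (@cadj_edge _ _ _ _ Hs2 (ltn_ord c1) (ltn_ord d1) Cadj).
Qed.

Lemma sameE n E (H1 H2 : seq (gvert n)) : dir_ham_cycle0 E -> edge_disjoint H1 H2 ->
  edge_disjoint (fEH E H1) (fEH E H2).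
Proof.
move=> [HE _] HD x y /cyc_edge_map [a [b [Hab -> ->]]].
apply/negP => /cyc_edge_map [c [d [Hcd e1 e2]]].
have Hs := @ham_size _ _ HE; case: HE => _ Hu _.
move: (@PhiE_inj _ _ _ _ Hs Hu e1) (@PhiE_inj _ _ _ _ Hs Hu e2) => ??; subst c d.
by have := HD _ _ Hab; rewrite Hcd.
Qed.

Lemma diffE n E1 E2 (H H' : seq (gvert n)) : 1 <= n ->
  ham_cycle (@gadj n) H -> ham_cycle (@gadj n) H' ->
  dir_ham_cycle0 E1 -> dir_ham_cycle0 E2 -> edge_disjoint E1 E2 ->
  edge_disjoint (fEH E1 H) (fEH E2 H').
Proof.
move=> Hn [_ _ Hc] [_ _ Hc'] [HE1 _] [HE2 _] HD x y /cyc_edge_map [a [b [Hab -> ->]]].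
apply/negP => /cyc_edge_map [c [d [Hcd e1 e2]]].
have Hs1 := @ham_size _ _ HE1; have Hs2 := @ham_size _ _ HE2; case: HE2 => _ Hu2 _.
apply: (@cross _ _ _ _ _ _ _ Hn Hs1 Hs2 Hu2 HD _ _ e1 e2).
  exact: (@cyc_edge_rel _ _ _ _ _ (@gadj_sym n) Hc Hab).
exact: (@cyc_edge_rel _ _ _ _ _ (@gadj_sym n) Hc' Hcd).
Qed.

Theorem lemma1 (n : nat) (H1 H2 : seq (gvert n)) (E1 E2 : seq (qvert n)) :
  1 <= n ->
  ham_cycle (@gadj n) H1 -> ham_cycle (@gadj n) H2 -> edge_disjoint H1 H2 ->
  dir_ham_cycle0 E1 -> dir_ham_cycle0 E2 -> edge_disjoint E1 E2 ->
  edge_disjoint (fEH E1 H1) (fEH E1 H2) /\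
  edge_disjoint (fEH E1 H1) (fEH E2 H1) /\
  edge_disjoint (fEH E1 H1) (fEH E2 H2) /\
  edge_disjoint (fEH E1 H2) (fEH E2 H1) /\
  edge_disjoint (fEH E1 H2) (fEH E2 H2) /\
  edge_disjoint (fEH E2 H1) (fEH E2 H2).
Proof.
move=> Hn HH1 HH2 HD HE1 HE2 HDE.
split; first exact: sameE.
split; first exact: diffE.
split; first exact: diffE.
split; first exact: diffE.
split; first exact: diffE.
exact: sameE.
Qed.
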